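(* Let $q$ be a prime power, let $1\le k\le m$ be integers, and let $C\subseteq\mathbb{F}_{q^m}^k$ be an $\mathbb{F}_{q^m}$-linear code of dimension $1\le t\le k$ over $\mathbb{F}_{q^m}$. Fix an integer $1\le\mu\le k$. The following are equivalent: (1) $\Delta_\mu(C)>\Delta_{\mu-1}(C)$; (2) there exists $1\le r\le t$ with $m_r(C)=\mu$.
   Context: A subspace $V\subseteq\mathbb{F}_{q^m}^k$ is Frobenius-closed if $(v_1^q,\dots,v_k^q)\in V$ whenever $v\in V$; $\Lambda_q(k,m)$ is the set of Frobenius-closed $\mathbb{F}_{q^m}$-subspaces. For $0\le\mu\le k$, $\Delta_\mu(C):=\max\{\dim_{\mathbb{F}_{q^m}}(V\cap C): V\in\Lambda_q(k,m),\ \dim_{\mathbb{F}_{q^m}}(V)=\mu\}$. The $r$-th generalized rank weight is $m_r(C):=\min\{\dim_{\mathbb{F}_{q^m}}(V):V\in\Lambda_q(k,m),\ \dim_{\mathbb{F}_{q^m}}(V\cap C)\ge r\}$. *)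

(* Defs.v *)
From mathcomp Require Import all_boot all_order all_algebra all_field.
Set Implicit Arguments. Unset Strict Implicit. Unset Printing Implicit Defensive.
Import GRing.Theory.
Local Open Scope ring_scope.

(* Subspaces of L^k are represented as row spaces of k x k matrices
   (mxalgebra, %MS), vectors as row vectors 'rV[L]_k. *)

Definition frobv (L : finFieldType) (q k : nat) (v : 'rV[L]_k) : 'rV[L]_k :=
  map_mx (fun x => x ^+ q) v.

Definition frob_closed (L : finFieldType) (q k : nat) (V : 'M[L]_k) : bool :=
  [forall v : 'rV[L]_k, (v <= V)%MS ==> (frobv q v <= V)%MS].

Definition Delta (L : finFieldType) (q k : nat) (C : 'M[L]_k) (mu : nat) : nat :=
  \max_(V : 'M[L]_k | frob_closed q V && (\rank V == mu)) \rank (V :&: C)%MS.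

(* m_r(C): minimum, with default k (the full space, dim k, is Frobenius-closed
   and admissible whenever r <= dim C) *)
Definition grw (L : finFieldType) (q k : nat) (C : 'M[L]_k) (r : nat) : nat :=
  \big[minn/k]_(V : 'M[L]_k | frob_closed q V && (r <= \rank (V :&: C)%MS)%N) \rank V.

(* Main.v *)
Require Import Defs.
From mathcomp Require Import all_boot all_order all_algebra all_field.
Set Implicit Arguments. Unset Strict Implicit. Unset Printing Implicit Defensive.
Import GRing.Theory.
Local Open Scope ring_scope.

Lemma bigmin_le (I : finType) (P : pred I) F d j : P j -> (\big[minn/d]_(i | P i) F i <= F j)%N.
Proof.
move=> Pj; rewrite unlock.
elim: (index_enum I) (mem_index_enum j) => // a s IH.
rewrite inE /= => /orP [/eqP <-|js]; first by rewrite Pj geq_minl.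
case: (P a) => /=; [exact: leq_trans (geq_minr _ _) (IH js) | exact: IH].
Qed.

Section Aux.
Variables (L : finFieldType) (q k : nat) (C : 'M[L]_k).
Hypothesis qadd : forall x y : L, (x + y) ^+ q = x ^+ q + y ^+ q.
Hypothesis qpos : (0 < q)%N.

Lemma frob_scale (c : L) (v : 'rV[L]_k) : frobv q (c *: v) = c ^+ q *: frobv q v.
Proof. by apply/matrixP => a b; rewrite !mxE exprMn. Qed.

Lemma frob_add (u v : 'rV[L]_k) : frobv q (u + v) = frobv q u + frobv q v.
Proof. by apply/matrixP => a b; rewrite !mxE qadd. Qed.

Lemma frob_delta (i : 'I_k) : frobv q (delta_mx 0 i : 'rV[L]_k) = delta_mx 0 i.
Proof.
apply/matrixP => a b; rewrite !mxE; case: (_ && _) => /=.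
  by rewrite expr1n.
by rewrite expr0n; case: q qpos.
Qed.

Lemma extend_step (V : 'M[L]_k) :
  frob_closed q V -> (\rank V < k)%N ->
  exists W : 'M[L]_k, [/\ frob_closed q W, \rank W = (\rank V).+1 & (V <= W)%MS].
Proof.
move=> fV rV.
have [i ni] : exists i : 'I_k, ~~ ((delta_mx 0 i : 'rV[L]_k) <= V)%MS.
  apply/existsP; rewrite -negb_forall; apply/negP => /forallP H.
  have : (1%:M <= V)%MS by apply/row_subP => i; rewrite row1; exact: H.
  by move/mxrankS; rewrite mxrank1 leqNgt rV.
exists (V + (delta_mx 0 i : 'rV[L]_k))%MS; split.
- apply/forallP => v; apply/implyP => /sub_addsmxP [[u1 u2] /= ->].
  rewrite frob_add; apply: addmx_sub_adds.
    by move/forallP: fV => /(_ (u1 *m V)) /implyP; apply; exact: submxMl.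
  have /sub_rVP [c ->] : (u2 *m (delta_mx 0 i : 'rV[L]_k) <= (delta_mx 0 i : 'rV[L]_k))%MS by exact: submxMl.
  by rewrite frob_scale frob_delta scalemx_sub.
- apply/eqP; rewrite eqn_leq; apply/andP; split.
    apply: leq_trans (mxrank_adds_leqif _ _) _.
    by rewrite -[X in (_ <= X)%N]addn1 leq_add2l rank_leq_row.
  have sVW := addsmxSl V (delta_mx 0 i : 'rV[L]_k).
  rewrite ltn_neqAle (mxrankS sVW) andbT.
  apply: contra ni => /eqP E.
  have : (V + (delta_mx 0 i : 'rV[L]_k) <= V)%MS by rewrite -(mxrank_leqif_sup sVW) E.
  by apply: submx_trans; exact: addsmxSr.
- exact: addsmxSl.
Qed.

Lemma Delta_ge j (V : 'M[L]_k) : frob_closed q V -> \rank V = j ->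
  (\rank (V :&: C)%MS <= Delta q C j)%N.
Proof.
move=> fV rV; rewrite /Delta.
exact: (@leq_bigmax_cond _ (fun V : 'M[L]_k => frob_closed q V && (\rank V == j))
  (fun V => \rank (V :&: C)%MS) V (introT andP (conj fV (introT eqP rV)))).
Qed.

Lemma Delta_step j : (j < k)%N -> (Delta q C j <= Delta q C j.+1)%N.
Proof.
move=> jk; apply/bigmax_leqP => V /andP [fV /eqP rV].
have rVk : (\rank V < k)%N by rewrite rV.
have [W [fW rW sVW]] := extend_step fV rVk.
apply: leq_trans (Delta_ge fW (etrans rW (congr1 S rV))).
by apply: mxrankS; apply: capmxS.
Qed.

Lemma Delta_mono a b : (a <= b <= k)%N -> (Delta q C a <= Delta q C b)%N.
Proof.
elim: b => [|b IH] /andP [ab bk]; first by rewrite leqn0 in ab; rewrite (eqP ab).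
rewrite leq_eqVlt in ab; case/orP: ab => [/eqP -> //| ab].
apply: leq_trans (Delta_step bk); apply: IH; rewrite -ltnS ab /=; exact: ltnW.
Qed.

End Aux.

Theorem theorem8p2 (L : finFieldType) (q m k t mu : nat) (C : 'M[L]_k) :
  (exists p e, prime p /\ (0 < e)%N /\ q = (p ^ e)%N) ->
  #|L| = (q ^ m)%N ->
  (1 <= k <= m)%N ->
  \rank C = t -> (1 <= t <= k)%N ->
  (1 <= mu <= k)%N ->
  ((Delta q C mu.-1 < Delta q C mu)%N <->
   exists r, (1 <= r <= t)%N /\ grw q C r = mu).
Proof.
move=> [p [e [pp [e0 ->]]]] cardL /andP [k1 km] rC /andP [t1 tk] /andP [mu1 muk].
have pc : p \in [pchar L] by apply: (card_finPcharP _ pp); rewrite cardL -expnM.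
have qadd : forall x y : L, (x + y) ^+ (p ^ e) = x ^+ (p ^ e) + y ^+ (p ^ e).
  move=> x y; apply: exprDn_pchar; rewrite pnatX (pnatE _ pp) pc //.
have qpos : (0 < p ^ e)%N by rewrite expn_gt0 prime_gt0.
set Q := (p ^ e)%N in qadd qpos *.
have mono := Delta_mono C qadd qpos.
have DeltaA : forall j, Delta Q C j = 0%N \/
   exists V : 'M[L]_k, [/\ frob_closed Q V, \rank V = j & Delta Q C j = \rank (V :&: C)%MS].
  move=> j; rewrite /Delta; apply: (big_ind (fun x => x = 0%N \/ exists V : 'M[L]_k,
     [/\ frob_closed Q V, \rank V = j & x = \rank (V :&: C)%MS])); first by left.
    move=> x y Hx Hy; rewrite /maxn; case: ifP => _; [exact: Hy | exact: Hx].
  by move=> V /andP [fV /eqP rV]; right; exists V.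
have grwA : forall r, (r <= t)%N -> exists V : 'M[L]_k,
   [/\ frob_closed Q V, (r <= \rank (V :&: C)%MS)%N & grw Q C r = \rank V].
  move=> r rt.
  have : grw Q C r = k \/ exists V : 'M[L]_k,
   [/\ frob_closed Q V, (r <= \rank (V :&: C)%MS)%N & grw Q C r = \rank V].
    rewrite /grw; apply: (big_ind (fun x => x = k \/ exists V : 'M[L]_k,
     [/\ frob_closed Q V, (r <= \rank (V :&: C)%MS)%N & x = \rank V])); first by left.
      move=> x y Hx Hy; rewrite /minn; case: ifP => _; [exact: Hx | exact: Hy].
    by move=> V /andP [fV rV]; right; exists V.
  case=> [E|//]; exists 1%:M; split.
  - by apply/forallP => v; apply/implyP => _; exact: submx1.
  - by rewrite cap1mx rC.
  - by rewrite E mxrank1.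
have grw_le : forall r (V : 'M[L]_k), frob_closed Q V -> (r <= \rank (V :&: C)%MS)%N ->
    (grw Q C r <= \rank V)%N.
  move=> r V fV rV; rewrite /grw.
  by apply: (@bigmin_le _ (fun V : 'M[L]_k => frob_closed Q V && (r <= \rank (V :&: C)%MS)%N)); rewrite fV rV.
split.
- move=> H.
  have [D0|[V [fV rV DV]]] := DeltaA mu; first by rewrite D0 in H.
  exists (Delta Q C mu); split.
    apply/andP; split; first by apply: leq_ltn_trans H.
    by rewrite DV -rC; apply: mxrankS; exact: capmxSr.
  apply/eqP; rewrite eqn_leq; apply/andP; split.
    by have := grw_le (Delta Q C mu) V fV; rewrite rV; apply; rewrite DV.
  rewrite /grw; apply: (big_ind (fun x => mu <= x)%N) => //.
    by move=> x y Hx Hy; rewrite leq_min Hx Hy.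
  move=> W /andP [fW rW]; rewrite leqNgt; apply/negP => Wl.
  have : (Delta Q C (\rank W) <= Delta Q C mu.-1)%N.
    apply: mono; rewrite -ltnS prednK // Wl /=.
    by apply: leq_trans muk; exact: leq_pred.
  apply/negP; rewrite -ltnNge; apply: leq_trans H _.
  exact: leq_trans rW (Delta_ge C fW (erefl _)).
- move=> [r [/andP [r1 rt] G]].
  have [V [fV rV GV]] := grwA r rt.
  have Hmu : (r <= Delta Q C mu)%N.
    exact: leq_trans rV (Delta_ge C fV (etrans (esym GV) G)).
  apply: leq_trans Hmu; rewrite ltnNge; apply/negP => Hle.
  have [D0|[W [fW rW DW]]] := DeltaA mu.-1.
    by rewrite D0 leqn0 in Hle; rewrite (eqP Hle) in r1.
  have := grw_le r W fW; rewrite -DW => /(_ Hle).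
  by rewrite G rW leqNgt prednK // leqnn.
Qed.
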